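(* Let $F:\mathcal{P}(V,A)\to S_2(A)$ be a consular election rule satisfying SPP and SPO, and let $P$ be a profile. If $\{a,b\}$ is the favourite committee of $P_i$ in the range of $F$ for every voter $i\in V$, then $F(P)=\{a,b\}$.
   Context: $V$ is a finite nonempty set of voters, $A$ a finite set of alternatives; a profile $P$ assigns to each voter $i$ a linear order $P_i$ on $A$; $P_i'P_{-i}$ replaces voter $i$'s order by $P_i'$. $S_2(A)$ is the set of 2-element subsets of $A$; a consular election rule is a map $F:\mathcal{P}(V,A)\to S_2(A)$. SPO: for all $P$, $i$, $P_i'$, $\mathrm{best}(P_i,F(P))\succeq_i\mathrm{best}(P_i,F(P_i'P_{-i}))$; SPP: same with $\mathrm{worst}$, where $\mathrm{best}(P_i,W)$, $\mathrm{worst}(P_i,W)$ are the $P_i$-best and $P_i$-worst elements of $W$. For a linear order $L$ on $A$ and $X,Y\in S_2(A)$: $X\succeq^O Y$ iff the $L$-best element of $X$ is weakly $L$-above that of $Y$; $X\succeq^P Y$ iff the $L$-worst element of $X$ is weakly $L$-above that of $Y$. A favourite committee of $L$ in $\mathcal{X}\subseteq S_2(A)$ is an element of $\mathcal{X}$ maximal in $\mathcal{X}$ under both $\succeq^O$ and $\succeq^P$ (for SPO and SPP rules it is unique in the range of $F$). *)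

(* Defs.v *)
From mathcomp Require Import all_boot.
Set Implicit Arguments. Unset Strict Implicit. Unset Printing Implicit Defensive.

(* A linear order on A, as a boolean relation: [r x y] means
   "x is ranked weakly above y" (x ⪰ y). *)
Definition is_linord (A : finType) (r : rel A) : Prop :=
  [/\ reflexive r, antisymmetric r, transitive r & total r].

Definition linord (A : finType) := {r : rel A | is_linord r}.

Definition lrel (A : finType) (L : linord A) : rel A := proj1_sig L.

Definition profile (V A : finType) := V -> linord A.

Definition upd (V A : finType) (P : profile V A) (i : V) (L : linord A)
  : profile V A := fun j => if j == i then L else P j.

Definition committee (A : finType) := {W : {set A} | #|W| == 2}.

Definition rule (V A : finType) := profile V A -> committee A.

Definition is_best (A : finType) (L : linord A) (W : {set A}) (x : A) : Prop :=
  x \in W /\ forall y, y \in W -> lrel L x y.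
Definition is_worst (A : finType) (L : linord A) (W : {set A}) (x : A) : Prop :=
  x \in W /\ forall y, y \in W -> lrel L y x.

Definition SPO (V A : finType) (F : rule V A) : Prop :=
  forall (P : profile V A) (i : V) (L' : linord A) (x y : A),
    is_best (P i) (val (F P)) x ->
    is_best (P i) (val (F (upd P i L'))) y ->
    lrel (P i) x y.
Definition SPP (V A : finType) (F : rule V A) : Prop :=
  forall (P : profile V A) (i : V) (L' : linord A) (x y : A),
    is_worst (P i) (val (F P)) x ->
    is_worst (P i) (val (F (upd P i L'))) y ->
    lrel (P i) x y.

Definition geO (A : finType) (L : linord A) (X Y : {set A}) : Prop :=
  forall x y, is_best L X x -> is_best L Y y -> lrel L x y.
Definition geP (A : finType) (L : linord A) (X Y : {set A}) : Prop :=
  forall x y, is_worst L X x -> is_worst L Y y -> lrel L x y.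

Definition in_range (V A : finType) (F : rule V A) (W : {set A}) : Prop :=
  exists P : profile V A, val (F P) = W.

(* W is a favourite committee of L in the family X: W belongs to X and is
   maximal (= greatest, both preorders being total) in X under ⪰^O and ⪰^P *)
Definition favourite (A : finType) (L : linord A) (X : {set A} -> Prop)
  (W : {set A}) : Prop :=
  X W /\ forall Y, X Y -> geO L W Y /\ geP L W Y.

(* Main.v *)
Require Import Defs.
From mathcomp Require Import all_boot.
From Stdlib Require Import FunctionalExtensionality.

Section H.
Variable A : finType.
Implicit Types (L : linord A) (W : {set A}).

Lemma lin L : is_linord (lrel L). Proof. exact: (proj2_sig L). Qed.

Lemma best_ex L W : #|W| == 2 -> exists z, is_best L W z.
Proof.
case/cards2P=> x [y [_ ->]]; have [_ _ _ tot] := lin L.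
have [rf _ _ _] := lin L.
case/orP: (tot x y) => h.
- exists x; split; first by rewrite !inE eqxx.
  by move=> z; rewrite !inE => /orP[]/eqP->.
- exists y; split; first by rewrite !inE eqxx orbT.
  by move=> z; rewrite !inE => /orP[]/eqP->.
Qed.

Lemma worst_ex L W : #|W| == 2 -> exists z, is_worst L W z.
Proof.
case/cards2P=> x [y [_ ->]]; have [_ _ _ tot] := lin L.
have [rf _ _ _] := lin L.
case/orP: (tot x y) => h.
- exists y; split; first by rewrite !inE eqxx orbT.
  by move=> z; rewrite !inE => /orP[]/eqP->.
- exists x; split; first by rewrite !inE eqxx.
  by move=> z; rewrite !inE => /orP[]/eqP->.
Qed.

Lemma bw_eq L W : #|W| == 2 -> forall b w, is_best L W b -> is_worst L W w ->
  W = [set b; w].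
Proof.
move=> hW b w [bW hb] [wW hw]; have [_ anti _ _] := lin L.
have bw : b != w.
  apply/negP=> /eqP E; subst w.
  have : W \subset [set b].
    apply/subsetP=> y yW; rewrite inE; apply/eqP/anti.
    by rewrite hw // hb.
  by move/subset_leq_card; rewrite (eqP hW) cards1.
apply/eqP; rewrite eq_sym eqEcard cards2 bw (eqP hW) andbT.
by rewrite subUset !sub1set bW wW.
Qed.

Lemma best_uniq L W b b' : is_best L W b -> is_best L W b' -> b = b'.
Proof. have [_ anti _ _] := lin L. move=> [h1 h2] [h3 h4]; apply/anti.
by rewrite h2 // h4. Qed.
Lemma worst_uniq L W b b' : is_worst L W b -> is_worst L W b' -> b = b'.
Proof. have [_ anti _ _] := lin L. move=> [h1 h2] [h3 h4]; apply/anti.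
by rewrite h2 // h4. Qed.
End H.

Theorem lemma48 (V A : finType) (F : rule V A) (P : profile V A) (a b : A) :
  0 < #|V| ->
  SPP F -> SPO F ->
  (forall i : V, favourite (P i) (in_range F) [set a; b]) ->
  val (F P) = [set a; b].
Proof.
move=> /card_gt0P [i0 _] spp spo fav.
have [[Q hQ] _] := fav i0.
have h2 : #|[set a; b]| == 2 by rewrite -hQ (valP (F Q)).
pose QS (S : {set V}) : profile V A := fun j => if j \in S then P j else Q j.
suff key : forall n (S : {set V}), #|S| = n -> val (F (QS S)) = [set a; b].
  have -> : P = QS setT by apply: functional_extensionality => j; rewrite /QS inE.
  exact: (key _ _ erefl).
elim=> [|n IH] S hS; rewrite -/(QS S).
  have -> : QS S = Q; last exact: hQ.
  apply: functional_extensionality => j; rewrite /QS.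
  by move/eqP: hS; rewrite cards_eq0 => /eqP->; rewrite inE.
have [i iS] : exists i, i \in S.
  by apply/set0Pn; rewrite -card_gt0 hS.
have hS' : #|S :\ i| = n by rewrite (cardsD1 i S) iS in hS; case: hS.
have E : QS (S :\ i) = upd (QS S) i (Q i).
  apply: functional_extensionality => j; rewrite /QS /upd !inE.
  by case: eqP => [->|].
have Pi : QS S i = P i by rewrite /QS iS.
set W1 := val (F (QS S)).
have h1 : #|W1| == 2 := valP (F (QS S)).
have [_ rng] := fav i.
have [gO gP] := rng W1 (ex_intro _ _ erefl).
have [x1 bx1] := best_ex _ (P i) _ h1.
have [y1 wy1] := worst_ex _ (P i) _ h1.
have [x0 bx0] := best_ex _ (P i) _ h2.
have [y0 wy0] := worst_ex _ (P i) _ h2.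
have [_ anti _ _] := lin _ (P i).
have ex : x1 = x0.
  apply/anti/andP; split; last exact: gO.
  have := spo (QS S) i (Q i) x1 x0; rewrite -E (IH _ hS') Pi; apply => //.
have ey : y1 = y0.
  apply/anti/andP; split; last exact: gP.
  have := spp (QS S) i (Q i) y1 y0; rewrite -E (IH _ hS') Pi; apply => //.
by rewrite (bw_eq _ _ _ h1 _ _ bx1 wy1) (bw_eq _ _ _ h2 _ _ bx0 wy0) ex ey.
Qed.
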